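(* Let $\{R_\alpha\}_{\alpha\in\Lambda}$ be a family of rings and, for each $\alpha$, let $I_\alpha$ be an ideal of $R_\alpha$. Put $R=\prod_{\alpha} R_\alpha$ and $I=\prod_\alpha I_\alpha$ (an ideal of $R$). Then $R$ is weakly $I$-clean if and only if every $R_\alpha$ is weakly $I_\alpha$-clean and at most one $R_\alpha$ fails to be $I_\alpha$-clean.
   Context: All rings are associative with identity. $Idem(R)$ denotes the set of idempotents of $R$. For an ideal $I$ of a ring $R$: $R$ is $I$-clean if for every $x\in R$ there is $e\in Idem(R)$ with $x-e\in I$; $R$ is weakly $I$-clean if for every $x\in R$ there is $e\in Idem(R)$ such that $x-e\in I$ or $x+e\in I$. *)

(* Defs.v *)
From HB Require Import structures.
From mathcomp Require Import all_boot all_algebra.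
Set Implicit Arguments. Unset Strict Implicit. Unset Printing Implicit Defensive.
Import GRing.Theory.
Local Open Scope ring_scope.

(* Generic notions over a ring signature (carrier with add, opp, mul), so that they
   apply verbatim both to a MathComp ring and to an arbitrary (possibly
   infinite, dependent) direct product of rings, which has no MathComp
   ringType instance (it lacks decidable equality). *)
Section Generic.
Variable T : Type.
Variables (add : T -> T -> T) (opp : T -> T) (mul : T -> T -> T).

Definition is_idem (e : T) : Prop := mul e e = e.

Definition Iclean_gen (I : T -> Prop) : Prop :=
  forall x, exists e, is_idem e /\ I (add x (opp e)).

Definition weakly_Iclean_gen (I : T -> Prop) : Prop :=
  forall x, exists e, is_idem e /\ (I (add x (opp e)) \/ I (add x e)).
End Generic.

Definition is_ideal (R : pzRingType) (I : R -> Prop) : Prop :=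
  [/\ I 0,
      (forall x y, I x -> I y -> I (x - y)),
      (forall r x, I x -> I (r * x)) &
      (forall r x, I x -> I (x * r))].

Definition Iclean (R : pzRingType) (I : R -> Prop) : Prop :=
  Iclean_gen +%R (@GRing.opp R) *%R I.
Definition weakly_Iclean (R : pzRingType) (I : R -> Prop) : Prop :=
  weakly_Iclean_gen +%R (@GRing.opp R) *%R I.

Section Product.
Variables (L : Type) (R : L -> pzRingType).
Definition prodR := forall a, R a.
Definition prod_add (x y : prodR) : prodR := fun a => x a + y a.
Definition prod_opp (x : prodR) : prodR := fun a => - x a.
Definition prod_mul (x y : prodR) : prodR := fun a => x a * y a.
Definition prod_ideal (I : forall a, R a -> Prop) (x : prodR) : Prop :=
  forall a, I a (x a).

Definition prod_Iclean (I : forall a, R a -> Prop) : Prop :=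
  Iclean_gen prod_add prod_opp prod_mul (prod_ideal I).
Definition prod_weakly_Iclean (I : forall a, R a -> Prop) : Prop :=
  weakly_Iclean_gen prod_add prod_opp prod_mul (prod_ideal I).
End Product.

(* Main.v *)
Require Import Defs.
From mathcomp Require Import all_boot all_algebra.
From Stdlib Require Import ClassicalEpsilon Classical Eqdep FunctionalExtensionality.
Import GRing.Theory.
Local Open Scope ring_scope.

Definition upd (L : Type) (R : L -> pzRingType) (a : L) (v : R a) (d : prodR R) : prodR R :=
  fun b => match excluded_middle_informative (a = b) with
           | left h => eq_rect a R v b h
           | right _ => d b end.

Lemma upd_same L R a v d : @upd L R a v d a = v.
Proof.
rewrite /upd; case: excluded_middle_informative => [h|h]; last by case: h.
by rewrite -Eqdep.EqdepTheory.eq_rect_eq.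
Qed.

Lemma upd_other L R a v d b : a <> b -> @upd L R a v d b = d b.
Proof. by rewrite /upd; case: excluded_middle_informative. Qed.

Lemma idealN (R : pzRingType) (I : R -> Prop) : is_ideal I -> forall z, I z -> I (- z).
Proof. by case=> H0 Hs _ _ z Hz; move: (Hs _ _ H0 Hz); rewrite sub0r. Qed.

Theorem mainTheorem1 (L : Type) (R : L -> pzRingType)
    (I : forall a, R a -> Prop) (hI : forall a, is_ideal (I a)) :
  prod_weakly_Iclean I <->
  ((forall a, weakly_Iclean (I a)) /\
   (forall a b, ~ Iclean (I a) -> ~ Iclean (I b) -> a = b)).
Proof.
split.
- move=> H; split.
  + move=> a x.
    have [e [He Hx]] := H (@upd _ R a x (fun b => 0)).
    exists (e a); split; first exact: (f_equal (fun f => f a) He).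
    case: Hx => Hx; [left|right]; move: (Hx a) => /=;
      by rewrite /prod_add /prod_opp upd_same.
  + move=> a b Ha Hb; apply: NNPP => nab.
    have [xa Hxa] : exists x : R a, forall e, is_idem *%R e -> ~ I a (x - e).
      apply: NNPP => Hn; apply: Ha => x; apply: NNPP => Hn2; apply: Hn; exists x.
      by move=> e He Hi; apply: Hn2; exists e.
    have [xb Hxb] : exists x : R b, forall e, is_idem *%R e -> ~ I b (x - e).
      apply: NNPP => Hn; apply: Hb => x; apply: NNPP => Hn2; apply: Hn; exists x.
      by move=> e He Hi; apply: Hn2; exists e.
    have [e [He Hx]] := H (@upd _ R a xa (@upd _ R b (- xb) (fun c => 0))).
    have Hea : is_idem *%R (e a) by exact: (f_equal (fun f => f a) He).
    have Heb : is_idem *%R (e b) by exact: (f_equal (fun f => f b) He).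
    case: Hx => Hx.
    * apply: (Hxa _ Hea); move: (Hx a) => /=.
      by rewrite /prod_add /prod_opp upd_same.
    * apply: (Hxb _ Heb); move: (Hx b) => /=.
      rewrite /prod_add /prod_opp upd_other // upd_same => /(@idealN _ _ (hI b)).
      by rewrite opprD opprK.
- move=> [Hw Hu] x.
  case: (classic (forall a, Iclean (I a))) => Hall.
  + have Hex : forall a, exists e : R a, is_idem *%R e /\ I a (x a - e).
      by move=> a; apply: Hall.
    exists (fun a => proj1_sig (constructive_indefinite_description _ (Hex a))).
    split.
    * rewrite /is_idem /prod_mul; apply: functional_extensionality_dep => a.
      by case: (constructive_indefinite_description _ _) => e [].
    * left => a /=; rewrite /prod_add /prod_opp.
      by case: (constructive_indefinite_description _ _) => e [].
  + have [a0 Ha0] : exists a0, ~ Iclean (I a0).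
      by apply: NNPP => Hn; apply: Hall => a; apply: NNPP => Hn2; apply: Hn; exists a.
    have [e0 [He0 Hx0]] := Hw a0 (x a0).
    case: Hx0 => Hx0.
    * have Hex : forall a, exists e : R a, is_idem *%R e /\ I a (x a - e).
        move=> a; case: (classic (a0 = a)) => h.
          by subst a; exists e0.
        case: (classic (Iclean (I a))) => Hc; first by apply: Hc.
        by case: h; apply: Hu.
      exists (fun a => proj1_sig (constructive_indefinite_description _ (Hex a))).
      split.
      -- rewrite /is_idem /prod_mul; apply: functional_extensionality_dep => a.
         by case: (constructive_indefinite_description _ _) => e [].
      -- left => a /=; rewrite /prod_add /prod_opp.
         by case: (constructive_indefinite_description _ _) => e [].
    * have Hex : forall a, exists e : R a, is_idem *%R e /\ I a (x a + e).
        move=> a; case: (classic (a0 = a)) => h.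
          by subst a; exists e0.
        case: (classic (Iclean (I a))) => Hc; last by case: h; apply: Hu.
        have [e [He Hi]] := Hc (- x a); exists e; split => //.
        by move: (@idealN _ _ (hI a) _ Hi); rewrite opprD !opprK.
      exists (fun a => proj1_sig (constructive_indefinite_description _ (Hex a))).
      split.
      -- rewrite /is_idem /prod_mul; apply: functional_extensionality_dep => a.
         by case: (constructive_indefinite_description _ _) => e [].
      -- right => a /=; rewrite /prod_add.
         by case: (constructive_indefinite_description _ _) => e [].
Qed.
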